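(* Let $G=D_n\times\mathbb Z/2$ and $H=D_n\times\{0\}$. Consider admissible homomorphisms $f:T(2,2,2,2,2,2)\to G$ for cover type I, i.e. surjective homomorphisms with each $f(\gamma_i)$ of order $2$ and with second component of $f(\gamma_i)$ equal to $1$ for all $i$, up to equivalence. Then: if $n$ is odd, the only admissible Hurwitz vector up to equivalence is $((y,1),(y,1),(yx,1),(yx,1),(e,1),(e,1))$; if $n=2m$ is even, every admissible Hurwitz vector is equivalent to one of $((y,1),(y,1),(yx,1),(yx,1),(e,1),(e,1))$, $((y,1),(yx^m,1),(yx,1),(yx,1),(x^m,1),(e,1))$, $((y,1),(yx^m,1),(yx^2,1),(yx^2,1),(x^m,1),(e,1))$ (this last one only when $m$ is odd); and for $n=2$ there are in addition the possibilities $((y,1),(y,1),(x,1),(x,1),(e,1),(e,1))$ and $((y,1),(yx,1),(x,1),(x,1),(x,1),(e,1))$.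
   Context: $D_n=\langle x,y\mid x^n=y^2=1,\ yxy^{-1}=x^{-1}\rangle$ with neutral element $e$; $\mathbb Z/2$ is written additively with generator $1$. $T(m_1,\dots,m_r):=\langle\gamma_1,\dots,\gamma_r\mid \gamma_1\cdots\gamma_r=1,\ \gamma_i^{m_i}=1\rangle$. The Hurwitz vector of $f$ is $(f(\gamma_1),\dots,f(\gamma_r))$; conversely a tuple $(v_1,\dots,v_r)$ of elements of $G$ with $v_1\cdots v_r=1$ defines such an $f$. The braid group $\mathcal B_r=\langle\sigma_1,\dots,\sigma_{r-1}\rangle$ acts on Hurwitz vectors by $\sigma_i:(\dots,v_i,v_{i+1},\dots)\mapsto(\dots,v_iv_{i+1}v_i^{-1},v_i,\dots)$, and $\mathrm{Aut}(G)_H$, the automorphisms of $G$ preserving $H$, acts componentwise. Two admissible $f,f'$ are equivalent if their Hurwitz vectors lie in the same $\mathcal B_r\times\mathrm{Aut}(G)_H$-orbit. *)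

(* Defs.v *)
From HB Require Import structures.
From mathcomp Require Import all_boot all_order all_algebra all_fingroup.
From Stdlib Require Import Relation_Operators.
Set Implicit Arguments.
Unset Strict Implicit.
Unset Printing Implicit Defensive.
Import GRing.Theory.

(* The dihedral group D_n of order 2n, modelled concretely: the pair (k, b)  *)
(* stands for x^k y^b, with k in Z/n.  Since y x y^-1 = x^-1 we get          *)
(*   x^k1 y^b1 * x^k2 y^b2 = x^(k1 + (-1)^b1 k2) y^(b1 + b2).                *)
(* ('Z_n is Z/nZ only for n >= 2, which is assumed in the theorem.)          *)

Definition dihedral (n : nat) : Type := ('Z_n * bool)%type.

Section Dihedral.
Variable n : nat.
Local Open Scope ring_scope.

HB.instance Definition _ := Finite.copy (dihedral n) ('Z_n * bool)%type.

Definition dih_mul (u v : dihedral n) : dihedral n :=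
  (u.1 + (if u.2 then - v.1 else v.1), u.2 (+) v.2).
Definition dih_one : dihedral n := (0, false).
Definition dih_inv (u : dihedral n) : dihedral n :=
  (if u.2 then u.1 else - u.1, u.2).

Lemma dih_mulA : associative dih_mul.
Proof.
case=> [a b] [c d] [e f]; rewrite /dih_mul /=.
congr (_, _); last by rewrite addbA.
by case: b; case: d => /=; rewrite ?opprD ?opprK addrA.
Qed.

Lemma dih_mul1 : left_id dih_one dih_mul.
Proof. by case=> a b; rewrite /dih_mul /= add0r. Qed.

Lemma dih_mulV : left_inverse dih_one dih_inv dih_mul.
Proof.
case=> a [|]; rewrite /dih_mul /dih_one /=; congr (_, _);
  by rewrite ?subrr ?addNr.
Qed.

HB.instance Definition _ :=
  Finite_isGroup.Build (dihedral n) dih_mulA dih_mul1 dih_mulV.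

Definition dih_x : dihedral n := (1, false).
Definition dih_y : dihedral n := (0, true).

End Dihedral.

(* G = D_n x Z/2 (direct product group; Z/2 = 'Z_2, written additively,  *)
(* i.e. its group law is addition and its neutral element is 0).          *)
Definition GT (n : nat) : finGroupType := (dihedral n * 'Z_2)%type.

Definition Hsub (n : nat) : {set GT n} := [set g : GT n | g.2 == 0%R].

Local Open Scope group_scope.

(* Hurwitz vectors are represented as sequences (of length 6 here). *)

(* admissible for cover type I, T(2,2,2,2,2,2) -> G:
   the tuple has length 6, product 1 (so it defines a homomorphism from T),
   each entry has order 2, second component 1, and the entries generate G
   (i.e. the homomorphism is surjective). *)
Definition admissible (n : nat) (v : seq (GT n)) : Prop :=
  [/\ size v = 6%N,
      \prod_(g <- v) g = 1,
      (forall g, g \in v -> #[g] = 2%N),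
      (forall g, g \in v -> g.2 = 1%R :> 'Z_2)
    & <<[set g in v]>> = [set: GT n]].

(* Braid generator sigma_(i+1) acting on positions i, i+1 (0-based):
   (.., v_i, v_(i+1), ..) |-> (.., v_i v_(i+1) v_i^-1, v_i, ..) *)
Definition braid_sigma (gT : finGroupType) (i : nat) (s : seq gT) : seq gT :=
  let a := nth 1 s i in
  let b := nth 1 s i.+1 in
  take i s ++ [:: a * b * a^-1; a] ++ drop i.+2 s.

Definition AutH (n : nat) : {set {perm GT n}} :=
  [set a in Aut [set: GT n] | a @: Hsub n == Hsub n].

Inductive hstep (n : nat) : seq (GT n) -> seq (GT n) -> Prop :=
  | hstep_braid (i : nat) (s : seq (GT n)) :
      (i.+1 < size s)%N -> hstep s (braid_sigma i s)
  | hstep_aut (a : {perm GT n}) (s : seq (GT n)) :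
      a \in AutH n -> hstep s (map a s).

(* equivalence = lying in the same orbit of the group generated by the
   sigma_i and Aut(G)_H, i.e. the equivalence closure of hstep. *)
Definition hequiv (n : nat) : seq (GT n) -> seq (GT n) -> Prop :=
  clos_refl_sym_trans (seq (GT n)) (@hstep n).

Definition gx (n : nat) : dihedral n := dih_x n.
Definition gy (n : nat) : dihedral n := dih_y n.
Definition ge (n : nat) : dihedral n := 1.

Definition w1 (n : nat) (d : dihedral n) : GT n := (d, 1%R).

(* Main.v *)
Require Import Defs.
From HB Require Import structures.
From mathcomp Require Import all_boot all_order all_algebra all_fingroup all_solvable.
From Stdlib Require Import Relation_Operators.
From mathcomp Require Import ring zify.
Import GRing.Theory.
Section S.
Variable n : nat.
Local Notation G := (GT n).
Local Notation D := (dihedral n).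
Definition refl (j : 'Z_n) : G := ((j, true), 1%R).
Definition rot (k : 'Z_n) : G := ((k, false), 1%R).
Lemma z2add (c d : 'Z_2) : (c * d)%g = (c + d)%R.
Proof. reflexivity. Qed.
Lemma z2inv (c : 'Z_2) : (c^-1)%g = (- c)%R.
Proof. reflexivity. Qed.
Lemma z2one : (1%g : 'Z_2) = 0%R.
Proof. reflexivity. Qed.
Lemma z2_11 : (1 + 1 : 'Z_2)%R = 0%R.
Proof. by apply/val_inj. Qed.
Lemma z2_cases (c : 'Z_2) : c = 0%R \/ c = 1%R.
Proof. case: c => [[|[|k]] Hk]; [left|right|]; try by apply/val_inj. by []. Qed.
Lemma mulGE (u v : G) : (u * v)%g = ((u.1 * v.1)%g, (u.2 * v.2)%g).
Proof. by []. Qed.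
Lemma mulDE (u v : D) : (u * v)%g = (u.1 + (if u.2 then - v.1 else v.1), u.2 (+) v.2)%R.
Proof. by []. Qed.
Lemma invDE (u : D) : (u^-1)%g = ((if u.2 then u.1 else - u.1)%R, u.2).
Proof. by []. Qed.
Lemma oneGE : (1%g : G) = ((0%R, false), 0%R).
Proof. by []. Qed.
Lemma conj_refl (a b : 'Z_n) : (refl a * refl b * (refl a)^-1)%g = refl (a + a - b)%R.
Proof.
rewrite /refl !mulGE /= !mulDE /=.
by rewrite addrAC; congr (_,_); apply/val_inj.
Qed.

Lemma hequiv_refl (s : seq G) : hequiv s s.
Proof. exact: rst_refl. Qed.
Lemma hequiv_sym (s t : seq G) : hequiv s t -> hequiv t s.
Proof. exact: rst_sym. Qed.
Lemma hequiv_trans (s t u : seq G) : hequiv s t -> hequiv t u -> hequiv s u.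
Proof. exact: rst_trans. Qed.

Definition bstep (s t : seq G) := exists i, (i.+1 < size s)%N /\ t = braid_sigma i s.
Definition bequiv := clos_refl_sym_trans _ bstep.

Lemma bequiv_hequiv s t : bequiv s t -> hequiv s t.
Proof.
elim=> {s t} [s t [i [Hi ->]]| s | s t _ IH | s t u _ IH1 _ IH2].
- by apply: rst_step; apply: hstep_braid.
- exact: rst_refl.
- exact: rst_sym.
- exact: rst_trans IH1 IH2.
Qed.

Lemma bequiv_refl s : bequiv s s. Proof. exact: rst_refl. Qed.
Lemma bequiv_sym s t : bequiv s t -> bequiv t s. Proof. exact: rst_sym. Qed.
Lemma bequiv_trans s t u : bequiv s t -> bequiv t u -> bequiv s u.
Proof. exact: rst_trans. Qed.
Lemma bequiv_step i s : (i.+1 < size s)%N -> bequiv s (braid_sigma i s).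
Proof. by move=> Hi; apply: rst_step; exists i. Qed.

Lemma braid_cons i g (s : seq G) : braid_sigma i.+1 (g :: s) = g :: braid_sigma i s.
Proof. by []. Qed.

Lemma bequiv_cons g s t : bequiv s t -> bequiv (g :: s) (g :: t).
Proof.
elim=> {s t} [s t [i [Hi ->]]| s | s t _ IH | s t u _ IH1 _ IH2].
- rewrite -braid_cons; apply: bequiv_step => /=; by rewrite ltnS.
- exact: rst_refl.
- exact: rst_sym.
- exact: rst_trans IH1 IH2.
Qed.

Lemma braid_split i (s : seq G) : (i.+1 < size s)%N ->
  exists l a b r, s = l ++ a :: b :: r /\
    braid_sigma i s = l ++ (a * b * a^-1)%g :: a :: r.
Proof.
move=> Hi.
exists (take i s), (nth 1%g s i), (nth 1%g s i.+1), (drop i.+2 s); split; last by [].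
rewrite -{1}(cat_take_drop i s) (drop_nth 1%g) ?(drop_nth 1%g (n:=i.+1)) //.
exact: ltnW.
Qed.

Lemma adm_braid l a b r :
  @admissible n (l ++ a :: b :: r) <-> @admissible n (l ++ (a * b * a^-1)%g :: a :: r).
Proof.
have Hc : (a * b * a^-1)%g = (b ^ a^-1)%g by rewrite /conjg invgK mulgA.
have H2 : (a * b * a^-1)%g.2 = b.2.
  by rewrite /= !z2add z2inv addrAC subrr add0r.
have Hgen : <<[set g in l ++ a :: b :: r]>>%g = <<[set g in l ++ (a * b * a^-1)%g :: a :: r]>>%g.
  apply/eqP; rewrite eqEsubset; apply/andP; split; rewrite gen_subG; apply/subsetP=> g;
    rewrite inE !mem_cat !inE => /orP [Hl|/or3P [/eqP->|/eqP->|Hr]];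
    try (by apply: mem_gen; rewrite inE !mem_cat !inE ?Hl ?Hr ?eqxx ?orbT).
  - have Ha : a \in <<[set g0 in l ++ (a * b * a^-1)%g :: a :: r]>>%g.
      by apply: mem_gen; rewrite inE !mem_cat !inE eqxx ?orbT.
    have Hb : (a * b * a^-1)%g \in <<[set g0 in l ++ (a * b * a^-1)%g :: a :: r]>>%g.
      by apply: mem_gen; rewrite inE !mem_cat !inE eqxx ?orbT.
    by have := groupM (groupM (groupVr Ha) Hb) Ha; rewrite !mulgA mulVg mul1g mulgKV.
  - by rewrite !groupM ?groupV //; apply: mem_gen; rewrite inE !mem_cat !inE eqxx ?orbT.
have Hp : (\prod_(g <- l ++ a :: b :: r) g)%g = (\prod_(g <- l ++ (a * b * a^-1)%g :: a :: r) g)%g.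
  by rewrite !big_cat !big_cons /= !mulgA mulgKV.
rewrite /admissible Hp !size_cat /=.
split=> -[Hs Hpr Ho H1 Hg]; split=> //.
- move=> g; rewrite !mem_cat !inE => /orP [Hl|/or3P [/eqP->|/eqP->|Hr]].
  + by apply: Ho; rewrite mem_cat Hl.
  + by rewrite Hc orderJ; apply: Ho; rewrite mem_cat !inE eqxx !orbT.
  + by apply: Ho; rewrite mem_cat !inE eqxx !orbT.
  + by apply: Ho; rewrite mem_cat !inE Hr !orbT.
- move=> g; rewrite !mem_cat !inE => /orP [Hl|/or3P [/eqP->|/eqP->|Hr]].
  + by apply: H1; rewrite mem_cat Hl.
  + by rewrite H2; apply: H1; rewrite mem_cat !inE eqxx !orbT.
  + by apply: H1; rewrite mem_cat !inE eqxx !orbT.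
  + by apply: H1; rewrite mem_cat !inE Hr !orbT.
- exact: (etrans (esym Hgen) Hg).
- move=> g; rewrite !mem_cat !inE => /orP [Hl|/or3P [/eqP->|/eqP->|Hr]].
  + by apply: Ho; rewrite mem_cat Hl.
  + by apply: Ho; rewrite mem_cat !inE eqxx !orbT.
  + by rewrite -(orderJ b a^-1) -Hc; apply: Ho; rewrite mem_cat !inE eqxx !orbT.
  + by apply: Ho; rewrite mem_cat !inE Hr !orbT.
- move=> g; rewrite !mem_cat !inE => /orP [Hl|/or3P [/eqP->|/eqP->|Hr]].
  + by apply: H1; rewrite mem_cat Hl.
  + by apply: H1; rewrite mem_cat !inE eqxx !orbT.
  + by rewrite -H2; apply: H1; rewrite mem_cat !inE eqxx !orbT.
  + by apply: H1; rewrite mem_cat !inE Hr !orbT.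
- exact: (etrans Hgen Hg).
Qed.

Lemma bequiv_adm s t : bequiv s t -> (@admissible n s <-> @admissible n t).
Proof.
elim=> {s t} [s t [i [Hi ->]]| s | s t _ IH | s t u _ IH1 _ IH2].
- by have [l [a [b [r [-> ->]]]]] := @braid_split i s Hi; apply: adm_braid.
- by [].
- by split=> /IH.
- by split=> [/IH1/IH2|/IH2/IH1].
Qed.


Lemma gen_pred (A : {set G}) (P : G -> Prop) : P 1%g ->
  (forall g h, P g -> h \in A -> P (g * h)%g) -> forall g, g \in <<A>>%g -> P g.
Proof.
move=> P1 PM g /gen_prodgP [k [c Hc ->]].
elim: k c Hc => [|k IH] c Hc; first by rewrite big_ord0.
rewrite big_ord_recr /=; apply: PM (Hc _).
exact: (IH (fun i => c (widen_ord (leqnSn k) i))).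
Qed.

Lemma order2P (g : G) : (#[g]%g == 2) = (g != 1%g) && (g * g == 1)%g.
Proof.
apply/idP/idP.
- move/eqP=> Ho; apply/andP; split.
  + by apply/eqP=> Hg; move: Ho; rewrite Hg order1.
  + by rewrite -(expgS g 1) -Ho expg_order.
- case/andP=> H1 H2.
  have : (#[g]%g %| 2)%N by rewrite order_dvdn expgS expg1.
  have : #[g]%g != 1%N by rewrite order_eq1.
  have := order_gt0 g.
  by case: #[g]%g => [|[|[|k]]].
Qed.

Section Morph.
Variable f : G -> G.
Hypothesis fM : forall x y, f (x * y)%g = (f x * f y)%g.
Hypothesis finj : injective f.
Hypothesis f2 : forall x, (f x).2 = x.2.

Lemma f1 : f 1%g = 1%g.
Proof. by apply/(mulgI (f 1%g)); rewrite -fM !mulg1. Qed.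

Lemma aut_hequiv s : hequiv s (map f s).
Proof.
set a := perm finj.
have Ha : a \in AutH n.
  rewrite inE; apply/andP; split.
  - rewrite inE; apply/andP; split; first by apply/subsetP=> x; rewrite inE.
    by apply/morphicP=> x y _ _; rewrite !permE.
  - rewrite eqEcard card_imset; last exact: perm_inj.
    rewrite leqnn andbT; apply/subsetP=> g /imsetP [h Hh ->].
    by move: Hh; rewrite !inE permE f2.
have -> : map f s = map a s by apply: eq_map=> x; rewrite permE.
by apply: rst_step; apply: hstep_aut.
Qed.

Lemma aut_adm s : @admissible n s -> @admissible n (map f s).
Proof.
case=> Hs Hp Ho H1 Hg; split.
- by rewrite size_map.
- have -> : (\prod_(g <- map f s) g)%g = f (\prod_(g <- s) g)%g.
    elim: s {Hs Hp Ho H1 Hg} => [|g s IH]; first by rewrite !big_nil f1.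
    by rewrite !big_cons IH fM.
  by rewrite Hp f1.
- move=> g /mapP [h Hh ->]; apply/eqP; rewrite order2P.
  have := Ho _ Hh; move/eqP; rewrite order2P => /andP [Ha Hb].
  apply/andP; split.
  + by apply: contra Ha => /eqP H; apply/eqP; apply: finj; rewrite H f1.
  + by rewrite -fM (eqP Hb) f1.
- by move=> g /mapP [h Hh ->]; rewrite f2; apply: H1.
- apply/eqP; rewrite eqEsubset subsetT /=; apply/subsetP=> g _.
  set a := perm finj.
  have -> : g = f ((a^-1)%g g) by rewrite -{1}(permKV a g) permE.
  apply: (@gen_pred [set g in s] (fun h => f h \in <<[set g in map f s]>>%g)).
  + by rewrite f1 group1.
  + move=> x y Hx Hy; rewrite fM groupM //; apply: mem_gen.
    by rewrite inE; apply: map_f; rewrite inE in Hy.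
  + by rewrite Hg inE.
Qed.
End Morph.


Definition aff (u w : 'Z_n) (g : G) : G :=
  ((u * g.1.1 + (if g.1.2 then w else 0))%R, g.1.2, g.2).

Lemma affM u w x y : aff u w (x * y)%g = (aff u w x * aff u w y)%g.
Proof.
case: x => [[x1 b1] c1]; case: y => [[x2 b2] c2].
rewrite /aff !mulGE /= !mulDE /=.
by case: b1; case: b2 => /=; congr (_, _, _); ring.
Qed.

Lemma aff2 u w x : (aff u w x).2 = x.2.
Proof. by []. Qed.

Lemma aff_inj u w : u \is a GRing.unit -> injective (aff u w).
Proof.
move=> Hu [[x1 b1] c1] [[x2 b2] c2] H.
have H2 : b1 = b2 := congr1 (fun g => g.1.2) H.
have H3 : c1 = c2 := congr1 snd H.
have H1 := congr1 (fun g => g.1.1) H; rewrite /= in H1; subst.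
by congr (_, _, _); apply: (mulrI Hu); move: H1 => /addIr.
Qed.

Definition trz (z : dihedral n) (g : G) : G :=
  ((g.1 * (if g.2 == 1%R then z else 1))%g, g.2).

Section Trz.
Variable z : dihedral n.
Hypothesis zz : (z * z = 1)%g.
Hypothesis zc : forall d, (d * z = z * d)%g.

Lemma trzM x y : trz z (x * y)%g = (trz z x * trz z y)%g.
Proof.
case: x => [x c1]; case: y => [y c2]; rewrite /trz !mulGE /= !z2add.
congr (_, _).
case: (z2_cases c1) => ->; case: (z2_cases c2) => -> /=.
- by rewrite !mulg1.
- by rewrite mulg1 mulgA.
- by rewrite mulg1 -!mulgA zc.
- by rewrite mulg1 -mulgA (mulgA z) -zc -mulgA zz mulg1.
Qed.

Lemma trz2 x : (trz z x).2 = x.2.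
Proof. by []. Qed.

Lemma trz_inj : injective (trz z).
Proof.
move=> [x c1] [y c2] H.
have H3 : c1 = c2 := congr1 snd H.
have H1 := congr1 fst H; rewrite /= in H1; subst.
by congr (_, _); move: H1 => /mulIg.
Qed.
End Trz.


Lemma val_sub (x y : 'Z_n) : (nat_of_ord y <= nat_of_ord x)%N -> nat_of_ord (x - y)%R = (nat_of_ord x - nat_of_ord y)%N.
Proof.
move=> H /=; have Hx := ltn_ord x; have Hy := ltn_ord y.
case: (posnP (nat_of_ord y)) => Hy0.
  by rewrite Hy0 !subn0 modnn addn0 modn_small.
rewrite [((_ - y) %% _)%N]modn_small; last by lia.
have -> : (x + ((Zp_trunc n).+2 - y) = (nat_of_ord x - nat_of_ord y) + (Zp_trunc n).+2)%N by lia.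
rewrite modnDr modn_small //; lia.
Qed.
Lemma u2 (x : 'Z_n) : (x + x = 0)%R -> x != 0%R -> (2 * nat_of_ord x = (Zp_trunc n).+2)%N.
Proof.
move=> /(congr1 val) /= /eqP H Hx0.
have Hx := ltn_ord x.
have : nat_of_ord x != 0%N by apply: contra Hx0 => /eqP Hv; apply/eqP/val_inj.
have /dvdnP [k Hk] : ((Zp_trunc n).+2 %| x + x)%N by [].
move=> Hv; case: k Hk => [|[|k]] Hk; nia.
Qed.
Lemma uniq2 (x y : 'Z_n) : (x + x = 0)%R -> (y + y = 0)%R -> x != 0%R -> y != 0%R -> x = y.
Proof.
move=> Hx Hy Hx0 Hy0; apply/val_inj.
have := u2 _ Hx Hx0; have := u2 _ Hy Hy0; rewrite /=; lia.
Qed.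
Lemma natN (x : 'Z_n) : (x *+ (Zp_trunc n).+2 = 0)%R.
Proof. by rewrite -mulr_natr (@pchar_Zp (Zp_trunc n).+2) ?mulr0. Qed.

Definition T4 a b c d (t : seq G) := [:: refl a, refl b, refl c, refl d & t].

Lemma step0 a b s : braid_sigma 0 (refl a :: refl b :: s) = refl (a + a - b)%R :: refl a :: s.
Proof. by rewrite /braid_sigma /= conj_refl drop0. Qed.

Lemma bstep0 a b s : bequiv (refl a :: refl b :: s) (refl (a + a - b)%R :: refl a :: s).
Proof. rewrite -step0; exact: bequiv_step. Qed.

Lemma bstep0' a b s : bequiv (refl a :: refl b :: s) (refl b :: refl (b + b - a)%R :: s).
Proof.
apply: bequiv_sym; have := bstep0 b (b + b - a)%R s.
by have -> : (b + b - (b + b - a) = a)%R by ring.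
Qed.

Lemma nz_val (x : 'Z_n) : x != 0%R -> (0 < nat_of_ord x)%N.
Proof. by move=> H; rewrite lt0n; apply: contra H => /eqP Hv; apply/eqP/val_inj. Qed.

Lemma euclid_aux N : forall a b c d t,
  (nat_of_ord (a - b)%R + nat_of_ord (b - c)%R < N)%N ->
  exists a' c' d', bequiv (T4 a b c d t) (T4 a' a' c' d' t).
Proof.
elim: N => [|N IH] a b c d t HN; first by [].
have [Hab|Hab] := eqVneq (a - b)%R 0%R.
  exists a, c, d; move/eqP: Hab; rewrite subr_eq0 => /eqP ->; exact: bequiv_refl.
have [Hbc|Hbc] := eqVneq (b - c)%R 0%R.
  move/eqP: Hbc; rewrite subr_eq0 => /eqP <-.
  exists (a + a - b)%R, a, d.
  apply: bequiv_trans (bstep0 _ _ _) _.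
  apply: bequiv_cons; exact: bstep0.
have Hp := nz_val _ Hab; have Hr := nz_val _ Hbc.
case: (leqP (nat_of_ord (b - c)%R) (nat_of_ord (a - b)%R)) => Hle.
- have E := @bequiv_cons (refl a) _ _ (bstep0 b c (refl d :: t)).
  have [|a' [c' [d' H]]] := IH a (b + b - c)%R b d t.
    have -> : (a - (b + b - c) = (a - b) - (b - c))%R by ring.
    have -> : (b + b - c - b = b - c)%R by ring.
    rewrite val_sub //; lia.
  by exists a', c', d'; exact: bequiv_trans E H.
- have E := bstep0' a b (refl c :: refl d :: t).
  have [|a' [c' [d' H]]] := IH b (b + b - a)%R c d t.
    have -> : (b - (b + b - a) = (a - b))%R by ring.
    have -> : (b + b - a - c = (b - c) - (a - b))%R by ring.
    rewrite (val_sub (b - c)%R (a - b)%R); [lia | exact: ltnW].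
  by exists a', c', d'; exact: bequiv_trans E H.
Qed.

Lemma euclid a b c d t :
  exists a' c' d', bequiv (T4 a b c d t) (T4 a' a' c' d' t).
Proof. exact: (@euclid_aux (nat_of_ord (a - b)%R + nat_of_ord (b - c)%R).+1). Qed.


Lemma oppN (x : 'Z_n) : (- x = x *+ (Zp_trunc n).+1)%R.
Proof. by have := natN x; rewrite mulrS => /addr0_eq. Qed.

Lemma adm_gen (s : seq G) (P : G -> Prop) : @admissible n s -> P 1%g ->
  (forall g h, P g -> h \in s -> P (g * h)%g) -> forall g, P g.
Proof.
case=> _ _ _ _ Hg P1 PM g; apply: (@gen_pred [set g in s]) => //.
- by move=> x y Px; rewrite inE; apply: PM.
- by rewrite Hg inE.
Qed.

Lemma adm_order (s : seq G) g : @admissible n s -> g \in s -> (g * g = 1)%g.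
Proof. by case=> _ _ Ho _ _ /Ho /eqP; rewrite order2P => /andP [_ /eqP]. Qed.

Definition V1 : seq G := [:: refl 0; refl 0; refl (-1); refl (-1); rot 0; rot 0]%R.
Definition V2 (k : 'Z_n) : seq G := [:: refl 0; refl k; refl (-1); refl (-1); rot k; rot 0]%R.

Lemma finalA (a c : 'Z_n) :
  @admissible n [:: refl a; refl a; refl c; refl c; rot 0; rot 0]%R ->
  hequiv [:: refl a; refl a; refl c; refl c; rot 0; rot 0]%R V1.
Proof.
move=> Hadm; set u := (c - a)%R.
have [j Hj] : exists j : nat, (1 - 0 = u *+ j)%R.
  apply: (@adm_gen _ (fun g => exists j : nat, g.1.1 - (if g.1.2 then a else 0) = u *+ j)%R
           Hadm _ _ ((1%R, false), 0%R)).
  - by exists 0%N; rewrite /= subr0.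
  - move=> [[k b] cc] h [i Hi].
    have Hk : k = (u *+ i + (if b then a else 0))%R by rewrite -Hi subrK.
    rewrite Hk !inE => /or3P [/eqP->|/eqP->|/or3P [/eqP->|/eqP->|/orP [/eqP->|/eqP->]]];
      rewrite /refl /rot mulGE /=; case: b {Hi Hk} => /=;
      first [ by exists i; ring | by exists i.+1; rewrite mulrSr /u; ring
            | by exists (i + (Zp_trunc n).+1)%N; rewrite mulrnDr -oppN /u; ring ].
have Hu : u \is a GRing.unit.
  by apply/unitrPr; exists (j%:R)%R; rewrite mulr_natr -Hj subr0.
set al := (- u^-1)%R.
have Hal : al \is a GRing.unit by rewrite unitrN unitrV.
have -> : V1 = map (aff al (- (al * a))%R) [:: refl a; refl a; refl c; refl c; rot 0; rot 0]%R.
  rewrite /V1 /= /aff /refl /rot /=.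
  have -> : (al * a - al * a = 0)%R by ring.
  have -> : (al * c - al * a = -1)%R.
    by rewrite -mulrBr /al mulNr mulVr.
  by rewrite mulr0 addr0.
apply: aut_hequiv.
- exact: affM.
- exact: aff_inj.
- exact: aff2.
Qed.


Lemma unit_or (u k : 'Z_n) (i j : nat) : k != 0%R -> (k + k = 0)%R ->
  (1 = u *+ i + k *+ j)%R -> u \is a GRing.unit \/ (u + k)%R \is a GRing.unit.
Proof.
move=> Hk0 Hkk H.
have Hkj : (k *+ j + k *+ j = 0)%R by rewrite -mulrnDl Hkk mul0rn.
have Hnk : (- k = k)%R by apply: addr0_eq.
case: (eqVneq (k *+ j)%R 0%R) => Hkj0.
  left; apply/unitrPr; exists (i%:R)%R; rewrite mulr_natr.
  by move: H; rewrite Hkj0 addr0 => ->.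
have E := uniq2 _ _ Hkj Hkk Hkj0 Hk0.
have Hui : (u * i%:R = 1 + k)%R.
  have H' : (u *+ i + k = 1)%R by rewrite [RHS]H E.
  by rewrite mulr_natr -Hnk -H' addrK.
have F : ((1 + k) * (1 + k) = 1 + k * k)%R.
  have -> : ((1 + k) * (1 + k) = 1 + (k + k) + k * k)%R by ring.
  by rewrite Hkk addr0.
have Hkk2 : (k * k + k * k = 0)%R by rewrite -mulrDl Hkk mul0r.
case: (eqVneq (k * k)%R 0%R) => Hkk0.
  left; apply/unitrPr; exists (i%:R * (1 + k))%R.
  by rewrite mulrA Hui F Hkk0 addr0.
have Ekk := uniq2 _ _ Hkk2 Hkk Hkk0 Hk0.
have Huk2 : (u * k + u * k = 0)%R by rewrite -mulrDr Hkk mulr0.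
case: (eqVneq (u * k)%R 0%R) => Huk0.
  right; apply/unitrPr; exists (i%:R * (1 + k) + k)%R.
  have -> : ((u + k) * (i%:R * (1 + k) + k) =
             (u * i%:R) * (1 + k) + u * k + (i%:R * (k + k * k) + k * k))%R by ring.
  by rewrite Hui F Huk0 Ekk Hkk mulr0 addr0 add0r -addrA Hkk addr0.
have Euk := uniq2 _ _ Huk2 Hkk Huk0 Hk0.
left; apply/unitrPr; exists (i%:R * (1 + k) + k)%R.
by rewrite mulrDr mulrA Hui F Euk Ekk -addrA Hkk addr0.
Qed.

Lemma finalB (c a k : 'Z_n) : k != 0%R -> (k + k = 0)%R -> (a - c)%R \is a GRing.unit ->
  hequiv [:: refl c; refl (c + k); refl a; refl a; rot k; rot 0]%R (V2 k).
Proof.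
move=> Hk0 Hkk Hu.
set al := (- (a - c)^-1)%R.
have Hal : al \is a GRing.unit by rewrite unitrN unitrV.
have Halk : (al * k = k)%R.
  apply: uniq2.
  - by rewrite -mulrDr Hkk mulr0.
  - exact: Hkk.
  - by apply: contra Hk0 => /eqP H; apply/eqP; apply: (mulrI Hal); rewrite H mulr0.
  - exact: Hk0.
have -> : V2 k = map (aff al (- (al * c))%R) [:: refl c; refl (c + k); refl a; refl a; rot k; rot 0]%R.
  rewrite /V2 /= /aff /refl /rot /=.
  have -> : (al * c - al * c = 0)%R by ring.
  have -> : (al * (c + k) - al * c = al * k)%R by ring.
  have -> : (al * a - al * c = -1)%R.
    by rewrite -mulrBr /al mulNr mulVr.
  by rewrite Halk !addr0 mulr0.
apply: aut_hequiv.
- exact: affM.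
- exact: aff_inj.
- exact: aff2.
Qed.


Arguments bequiv_cons g [s t].
Arguments bequiv_trans [s t u].
Arguments hequiv_trans [s t u].
Arguments bequiv_hequiv [s t].

Definition Cc (s : seq G) := hequiv s V1 \/
  exists k : 'Z_n, [/\ k != 0%R, (k + k = 0)%R & hequiv s (V2 k)].

Lemma Cc_trans s t : hequiv s t -> Cc t -> Cc s.
Proof.
move=> H [H1|[k [H1 H2 H3]]]; [left|right]; first exact: hequiv_trans H H1.
by exists k; split=> //; exact: hequiv_trans H H3.
Qed.

Lemma braid4 a c d t : bequiv (T4 a a c d t) (T4 c d a a t).
Proof.
rewrite /T4.
apply: bequiv_trans (bequiv_cons _ (bstep0 a c _)) _.
apply: bequiv_trans (bstep0 _ _ _) _.
have -> : (a + a - (a + a - c) = c)%R by ring.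
apply: bequiv_cons.
apply: bequiv_trans (bequiv_cons _ (bstep0 a d _)) _.
apply: bequiv_trans (bstep0 _ _ _) _.
have -> : (a + a - (a + a - d) = d)%R by ring.
exact: bequiv_refl.
Qed.

Lemma rot_comm (k : 'Z_n) (g : G) : (k + k = 0)%R -> (rot k * g = g * rot k)%g.
Proof.
move=> Hkk; have Hnk : (- k = k)%R by apply: addr0_eq.
case: g => [[j b] c]; rewrite /rot !mulGE /= !z2add; congr (_, _, _).
- by case: b; rewrite ?Hnk addrC.
- by rewrite /= addbC.
- by rewrite addrC.
Qed.

Lemma bswap g h s : (g * h = h * g)%g -> bequiv (g :: h :: s) (h :: g :: s).
Proof.
move=> H; have := @bequiv_step 0 (g :: h :: s) isT.
by rewrite /braid_sigma /= drop0 H mulgK.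
Qed.

Lemma main4n a c d k :
  @admissible n [:: refl a; refl a; refl c; refl d; rot 0; rot k]%R ->
  Cc [:: refl a; refl a; refl c; refl d; rot 0; rot k]%R.
Proof.
move=> Hadm.
have Hkk : (k + k = 0)%R.
  have := @adm_order _ (rot k) Hadm; rewrite !inE eqxx !orbT => /(_ isT).
  by move/(congr1 (fun g => g.1.1)).
have Hnk : (- k = k)%R by apply: addr0_eq.
have Hd : d = (c + k)%R.
  case: Hadm => _ Hp _ _ _; move: Hp; rewrite !big_cons big_nil /= => /(congr1 (fun g => g.1.1)) /= Hq.
  apply/eqP; rewrite eq_sym -subr_eq0; apply/eqP; rewrite -Hq; ring.
subst d.
case: (eqVneq k 0%R) => Hk0.
  subst k; left; rewrite addr0; apply: finalA; by rewrite addr0 in Hadm.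
set u := (c - a)%R.
have [i [j Hij]] : exists i j : nat, (1 - 0 = u *+ i + k *+ j)%R.
  apply: (@adm_gen _ (fun g => exists i j : nat,
              g.1.1 - (if g.1.2 then a else 0) = u *+ i + k *+ j)%R
           Hadm _ _ ((1%R, false), 0%R)).
  - by exists 0%N, 0%N; rewrite /= subr0 addr0.
  - move=> [[k0 b] cc] h [i [j Hi]].
    have Hk : k0 = (u *+ i + k *+ j + (if b then a else 0))%R by rewrite -Hi subrK.
    rewrite Hk !inE => /or3P [/eqP->|/eqP->|/or3P [/eqP->|/eqP->|/orP [/eqP->|/eqP->]]];
      rewrite /refl /rot mulGE /=; case: b {Hi Hk} => /=;
      first [ by exists i, j; ring
            | by exists i.+1, j; rewrite mulrSr /u; ring
            | by exists (i + (Zp_trunc n).+1)%N, j; rewrite mulrnDr -oppN /u; ring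
            | by exists i, j.+1; rewrite mulrSr; ring
            | by exists i, (j + (Zp_trunc n).+1)%N; rewrite mulrnDr -oppN; ring
            | by exists i, (j + (Zp_trunc n).+1)%N; rewrite mulrnDr -oppN Hnk; ring
            | by exists i.+1, j.+1; rewrite !mulrSr /u; ring
            | by exists (i + (Zp_trunc n).+1)%N, (j + (Zp_trunc n).+1)%N;
                 rewrite !mulrnDr -!oppN /u; ring ].
have Hchain : bequiv [:: refl a; refl a; refl c; refl (c + k); rot 0; rot k]%R
                     [:: refl c; refl (c + k); refl a; refl a; rot k; rot 0]%R.
  apply: bequiv_trans (braid4 _ _ _ _) _; rewrite /T4.
  do 4! apply: bequiv_cons; apply: bswap; apply: esym; exact: rot_comm.
right; exists k; split=> //.
apply: hequiv_trans (bequiv_hequiv Hchain) _.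
have := @unit_or u k i j Hk0 Hkk; rewrite -Hij subr0 => /(_ erefl) [Hu|Hu].
- apply: finalB => //; by rewrite -opprB unitrN.
- have Hsw : bequiv [:: refl c; refl (c + k); refl a; refl a; rot k; rot 0]%R
                    [:: refl (c + k); refl (c + k + k); refl a; refl a; rot k; rot 0]%R.
    apply: bequiv_trans (bstep0 _ _ _) _.
    have -> : (c + c - (c + k) = c + k)%R by rewrite addrKA Hnk.
    have -> : (c + k + k = c)%R by rewrite -addrA Hkk addr0.
    exact: bequiv_refl.
  apply: hequiv_trans (bequiv_hequiv Hsw) _.
  apply: finalB => //.
  have -> : (a - (c + k) = - (u + k))%R by rewrite /u; ring.
  by rewrite unitrN.
Qed.


Lemma rot_order (s : seq G) k : @admissible n s -> rot k \in s -> (k + k = 0)%R.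
Proof.
by move=> Hadm Hin; have := @adm_order _ (rot k) Hadm Hin; move/(congr1 (fun g => g.1.1)).
Qed.

Section TrRot.
Variable k : 'Z_n.
Hypothesis Hkk : (k + k = 0)%R.
Let z : dihedral n := (k, false).
Lemma zz_rot : (z * z = 1)%g.
Proof. by rewrite mulDE /= Hkk. Qed.
Lemma zc_rot d : (d * z = z * d)%g.
Proof.
have Hnk : (- k = k)%R by apply: addr0_eq.
by case: d => j b; rewrite !mulDE /=; case: b; rewrite ?Hnk addrC ?addbF.
Qed.
Lemma trz_refl_rot j : trz z (refl j) = refl (j - k)%R.
Proof. by []. Qed.
Lemma trz_rot_rot j : trz z (rot j) = rot (j + k)%R.
Proof. by []. Qed.
End TrRot.

Lemma main4 a1 a2 a3 a4 k5 k6 :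
  @admissible n [:: refl a1; refl a2; refl a3; refl a4; rot k5; rot k6] ->
  Cc [:: refl a1; refl a2; refl a3; refl a4; rot k5; rot k6].
Proof.
move=> Hadm.
have [a [c [d Hb]]] := euclid a1 a2 a3 a4 [:: rot k5; rot k6].
have Hadm2 := (bequiv_adm _ _ Hb).1 Hadm.
have Hk5 : (k5 + k5 = 0)%R by apply: (@rot_order _ k5 Hadm); rewrite !inE eqxx !orbT.
set f := trz (k5, false).
have Em : map f (T4 a a c d [:: rot k5; rot k6]) =
   [:: refl (a - k5); refl (a - k5); refl (c - k5); refl (d - k5); rot 0; rot (k6 + k5)]%R.
  by rewrite /= /f !trz_refl_rot !trz_rot_rot Hk5.
have Hadm3 := @aut_adm f (trzM _ (zz_rot _ Hk5) (zc_rot _ Hk5)) (trz_inj _) (trz2 _) _ Hadm2.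
rewrite Em in Hadm3.
apply: (Cc_trans _ _ _ (main4n _ _ _ _ Hadm3)).
apply: hequiv_trans (bequiv_hequiv Hb) _.
rewrite -Em; apply: aut_hequiv.
- exact: (trzM _ (zz_rot _ Hk5) (zc_rot _ Hk5)).
- exact: trz_inj.
- exact: trz2.
Qed.


Definition isR (g : G) : bool := g.1.2.

Lemma move_past g L C : (forall h, (g * h = h * g)%g) -> bequiv (g :: L ++ C) (L ++ g :: C).
Proof.
move=> Hg; elim: L => [|l L IH] /=; first exact: bequiv_refl.
apply: bequiv_trans (bswap _ _ _ (Hg l)) _.
exact: bequiv_cons.
Qed.

Lemma sort_bequiv s : (forall g, g \in s -> ~~ isR g -> forall h, (g * h = h * g)%g) ->
  bequiv s (filter isR s ++ filter (predC isR) s).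
Proof.
elim: s => [|g s IH] Hs /=; first exact: bequiv_refl.
have IH' : bequiv s (filter isR s ++ filter (predC isR) s).
  by apply: IH => h Hh; apply: Hs; rewrite inE Hh orbT.
case Hg: (isR g) => /=.
- exact: bequiv_cons.
- apply: bequiv_trans (bequiv_cons g IH') _.
  apply: move_past; apply: Hs; first by rewrite inE eqxx.
  by rewrite Hg.
Qed.

Lemma shapeR (s : seq G) g : @admissible n s -> g \in s -> isR g -> g = refl g.1.1.
Proof.
case=> _ _ _ H1 _ Hin; have := H1 _ Hin.
by case: g {Hin} => [[j b] c] /= ->; rewrite /isR /= => ->.
Qed.

Lemma shapeC (s : seq G) g : @admissible n s -> g \in s -> ~~ isR g -> g = rot g.1.1.
Proof.
case=> _ _ _ H1 _ Hin; have := H1 _ Hin.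
by case: g {Hin} => [[j b] c] /= ->; rewrite /isR /= => /negbTE ->.
Qed.

Lemma central_adm (s : seq G) g : @admissible n s -> g \in s -> ~~ isR g ->
  forall h, (g * h = h * g)%g.
Proof.
move=> Hadm Hin HR h; rewrite (shapeC _ _ Hadm Hin HR).
apply: rot_comm; apply: (@rot_order s); first exact: Hadm.
by rewrite -(shapeC _ _ Hadm Hin HR).
Qed.

Lemma sorted_adm (v : seq G) : @admissible n v ->
  bequiv v (filter isR v ++ filter (predC isR) v) /\
  @admissible n (filter isR v ++ filter (predC isR) v).
Proof.
move=> Hadm; have Hb : bequiv v (filter isR v ++ filter (predC isR) v).
  apply: sort_bequiv => g Hg HR; exact: (central_adm _ _ Hadm Hg HR).
by split=> //; apply: (bequiv_adm _ _ Hb).1.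
Qed.

Lemma route4 v : @admissible n v -> count isR v = 4%N -> Cc v.
Proof.
move=> Hadm Hc.
have [Hb Hadm'] := sorted_adm _ Hadm.
apply: (Cc_trans _ _ (bequiv_hequiv Hb)).
have HR : forall g, g \in filter isR v -> g = refl g.1.1.
  by move=> g; rewrite mem_filter => /andP [H1 H2]; apply: (shapeR _ _ Hadm).
have HC : forall g, g \in filter (predC isR) v -> g = rot g.1.1.
  by move=> g; rewrite mem_filter => /andP [H1 H2]; apply: (shapeC _ _ Hadm).
have Hs1 : size (filter isR v) = 4%N by rewrite size_filter.
have Hs2 : size (filter (predC isR) v) = 2%N.
  by rewrite size_filter; have := count_predC isR v; case: Hadm => -> _ _ _ _; rewrite Hc => /eqP; rewrite -{1}(addn2 4) eqn_add2l => /eqP.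
move: HR HC Hs1 Hs2 Hadm'.
case: (filter isR v) => [|g1 [|g2 [|g3 [|g4 [|g5 l]]]]] //.
case: (filter (predC isR) v) => [|h1 [|h2 [|h3 l']]] // HR HC _ _.
have E : [:: g1, g2, g3, g4 & [:: h1; h2]] =
   [:: refl g1.1.1; refl g2.1.1; refl g3.1.1; refl g4.1.1; rot h1.1.1; rot h2.1.1].
  by rewrite -!HR ?inE ?eqxx ?orbT // -!HC ?inE ?eqxx ?orbT.
rewrite /= E; exact: main4.
Qed.


Lemma prod_parity (s : seq G) : (\prod_(g <- s) g)%g.1.2 = odd (count isR s).
Proof.
elim: s => [|g s IH]; first by rewrite big_nil.
by rewrite big_cons /= IH oddD oddb.
Qed.

Lemma count_le6 v : @admissible n v -> (count isR v <= 6)%N.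
Proof. by case=> Hs _ _ _ _; rewrite -Hs count_size. Qed.

Lemma R0_false v : @admissible n v -> count isR v = 0%N -> False.
Proof.
move=> Hadm Hc.
have Hall : forall h, h \in v -> ~~ isR h.
  by apply/hasPn; rewrite has_count Hc.
suff : ~~ (((0%R, true), 0%R) : G).1.2 by [].
apply: (@adm_gen v (fun g => ~~ g.1.2) Hadm isT) => g h Hg Hh.
have := Hall h Hh; rewrite /isR /= => /negbTE ->.
by rewrite addbF.
Qed.

Lemma R6_false v : @admissible n v -> count isR v = 6%N -> False.
Proof.
move=> Hadm Hc.
have Hall : forall h, h \in v -> isR h.
  apply/allP; rewrite all_count Hc; by case: Hadm => ->.
have H1v : forall h, h \in v -> h.2 = 1%R by case: Hadm.
suff : (((0%R, false), 1%R) : G).1.2 = ((((0%R, false), 1%R) : G).2 != 0%R) by [].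
apply: (@adm_gen v (fun g => g.1.2 = (g.2 != 0%R)) Hadm erefl) => g h Hg Hh.
have := Hall h Hh; rewrite /isR /= => ->.
rewrite (H1v h Hh) Hg z2add.
by case: (z2_cases g.2) => ->.
Qed.


Lemma dbl (x d e : 'Z_n) : (x + x = 0)%R -> (d + d = 0)%R -> e = (x + d)%R -> (e + e = 0)%R.
Proof. move=> Hx Hd ->; have -> : (x + d + (x + d) = (x + x) + (d + d))%R by ring. by rewrite Hx Hd addr0. Qed.

Lemma negdbl (d : 'Z_n) : (d + d = 0)%R -> (- d + - d = 0)%R.
Proof. by move=> H; rewrite -opprD H oppr0. Qed.

Lemma R2_shape v : @admissible n v -> count isR v = 2%N ->
  exists a b k3 k4 k5 k6, hequiv v [:: refl a; refl b; rot k3; rot k4; rot k5; rot k6] /\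
    @admissible n [:: refl a; refl b; rot k3; rot k4; rot k5; rot k6].
Proof.
move=> Hadm Hc.
have [Hb Hadm'] := sorted_adm _ Hadm.
have HR : forall g, g \in filter isR v -> g = refl g.1.1.
  by move=> g; rewrite mem_filter => /andP [H1 H2]; apply: (shapeR _ _ Hadm).
have HC : forall g, g \in filter (predC isR) v -> g = rot g.1.1.
  by move=> g; rewrite mem_filter => /andP [H1 H2]; apply: (shapeC _ _ Hadm).
have Hs1 : size (filter isR v) = 2%N by rewrite size_filter.
have Hs2 : size (filter (predC isR) v) = 4%N.
  rewrite size_filter; have := count_predC isR v; case: Hadm => -> _ _ _ _; rewrite Hc.
  by move=> H; apply/eqP; rewrite -(eqn_add2l 2) H.
move: HR HC Hs1 Hs2 Hadm' Hb.
case: (filter isR v) => [|g1 [|g2 [|g3 l]]] //.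
case: (filter (predC isR) v) => [|h1 [|h2 [|h3 [|h4 [|h5 l']]]]] // HR HC _ _.
have E : [:: g1, g2 & [:: h1; h2; h3; h4]] =
   [:: refl g1.1.1; refl g2.1.1; rot h1.1.1; rot h2.1.1; rot h3.1.1; rot h4.1.1].
  by rewrite -!HR ?inE ?eqxx ?orbT // -!HC ?inE ?eqxx ?orbT.
rewrite /= E => Hadm' Hb.
by do 6! eexists; split; [exact: bequiv_hequiv Hb|exact: Hadm'].
Qed.

Lemma R2_big a b k3 k4 k5 k6 : (Zp_trunc n).+2 != 2%N ->
  @admissible n [:: refl a; refl b; rot k3; rot k4; rot k5; rot k6] -> False.
Proof.
move=> HN Hadm.
have H3 : (k3 + k3 = 0)%R by apply: (rot_order _ _ Hadm); rewrite !inE eqxx !orbT.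
have H4 : (k4 + k4 = 0)%R by apply: (rot_order _ _ Hadm); rewrite !inE eqxx !orbT.
have H5 : (k5 + k5 = 0)%R by apply: (rot_order _ _ Hadm); rewrite !inE eqxx !orbT.
have H6 : (k6 + k6 = 0)%R by apply: (rot_order _ _ Hadm); rewrite !inE eqxx !orbT.
have Hq : (a - (b - (k3 + (k4 + (k5 + (k6 + 0))))) = 0)%R.
  by case: Hadm => _ Hp _ _ _; move: Hp; rewrite !big_cons big_nil /= => /(congr1 (fun g => g.1.1)).
have Hab : ((a - b) + (a - b) = 0)%R.
  have <- : ((a - (b - (k3 + (k4 + (k5 + (k6 + 0)))))) + (a - (b - (k3 + (k4 + (k5 + (k6 + 0))))))
      - ((k3 + k3) + (k4 + k4) + (k5 + k5) + (k6 + k6)) = (a - b) + (a - b))%R by ring.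
  by rewrite Hq H3 H4 H5 H6 !addr0 subr0.
have Hba : ((b - a) + (b - a) = 0)%R by rewrite -opprB; apply: negdbl.
have H0 : (0 + 0 = 0 :> 'Z_n)%R by rewrite addr0.
have N3 := negdbl _ H3; have N4 := negdbl _ H4; have N5 := negdbl _ H5; have N6 := negdbl _ H6.
suff H : ((1 - 0) + (1 - 0) = 0 :> 'Z_n)%R.
  move: H; rewrite subr0 => /(congr1 val) /=.
  by move: HN; case: (Zp_trunc n) => [|k] // _; rewrite !modn_small.
apply: (@adm_gen _ (fun g => let y := (g.1.1 - (if g.1.2 then a else 0))%R in (y + y = 0)%R)
           Hadm _ _ ((1%R, false), 0%R)).
- by rewrite /= subr0 addr0.
- move=> [[k0 bb] cc] h /= Hy.
  rewrite !inE => /or3P [/eqP->|/eqP->|/or3P [/eqP->|/eqP->|/orP [/eqP->|/eqP->]]];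
    rewrite /refl /rot /= ?mulGE /=; case: bb Hy => /= Hy;
    first [ by apply: (dbl _ _ _ Hy H0); ring | by apply: (dbl _ _ _ Hy Hab); ring
          | by apply: (dbl _ _ _ Hy Hba); ring
          | by apply: (dbl _ _ _ Hy H3); ring | by apply: (dbl _ _ _ Hy N3); ring
          | by apply: (dbl _ _ _ Hy H4); ring | by apply: (dbl _ _ _ Hy N4); ring
          | by apply: (dbl _ _ _ Hy H5); ring | by apply: (dbl _ _ _ Hy N5); ring
          | by apply: (dbl _ _ _ Hy H6); ring | by apply: (dbl _ _ _ Hy N6); ring ].
Qed.


Lemma R2_small a b k3 k4 k5 k6 : (Zp_trunc n).+2 = 2%N ->
  @admissible n [:: refl a; refl b; rot k3; rot k4; rot k5; rot k6] ->
  Cc [:: refl a; refl b; rot k3; rot k4; rot k5; rot k6].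
Proof.
move=> HN Hadm.
have Hjj : forall j : 'Z_n, (- j = j)%R.
  by move=> j; apply: addr0_eq; have := natN j; rewrite HN mulr2n.
set z : dihedral n := (0%R, true).
have zz : (z * z = 1)%g by rewrite mulDE /= oppr0 addr0.
have zc : forall d, (d * z = z * d)%g.
  by case=> j bb; rewrite !mulDE /= oppr0 add0r Hjj; case: bb; rewrite ?addr0 /=.
have Em : map (trz z) [:: refl a; refl b; rot k3; rot k4; rot k5; rot k6] =
          [:: rot a; rot b; refl k3; refl k4; refl k5; refl k6].
  by rewrite /= /trz /refl /rot /= /z !mulDE /= !Hjj !addr0.
have Hadm2 := @aut_adm (trz z) (trzM _ zz zc) (trz_inj _) (trz2 _) _ Hadm.
rewrite Em in Hadm2.
apply: (Cc_trans _ _ _ (route4 _ Hadm2 _)); last by [].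
rewrite -Em; apply: aut_hequiv.
- exact: (trzM _ zz zc).
- exact: trz_inj.
- exact: trz2.
Qed.

Lemma mainCc v : @admissible n v -> Cc v.
Proof.
move=> Hadm.
have Hle := count_le6 _ Hadm.
have Hpar : ~~ odd (count isR v).
  by rewrite -prod_parity; case: Hadm => _ -> _ _ _.
move: (erefl (count isR v)) Hle Hpar.
case: {2 3 4}(count isR v) => [|[|[|[|[|[|[|c]]]]]]] Hc // _ _.
- by case: (R0_false _ Hadm Hc).
- have [a [b [k3 [k4 [k5 [k6 [Hh Hadm']]]]]]] := R2_shape _ Hadm Hc.
  apply: (Cc_trans _ _ Hh).
  case: (eqVneq (Zp_trunc n).+2 2%N) => HN.
  + exact: R2_small.
  + by case: (R2_big _ _ _ _ _ _ HN Hadm').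
- exact: route4.
- by case: (R6_false _ Hadm Hc).
Qed.

End S.

Lemma dihX (n : nat) (j : nat) : ((dih_x n) ^+ j)%g = (j%:R, false)%R.
Proof.
elim: j => [|j IH]; first by [].
by rewrite expgS IH mulDE /= mulrS.
Qed.

Lemma GX (n : nat) (j : nat) : ((((1%R, false), 0%R) : GT n) ^+ j)%g = ((j%:R, false), 0%R)%R.
Proof.
elim: j => [|j IH]; first by [].
rewrite expgS IH mulGE /= mulDE /= mulrS z2add addr0; congr (_, _, _).
Qed.

Lemma adm_V1 (n : nat) : @admissible n (V1 n).
Proof.
split.
- by [].
- rewrite /V1 !big_cons big_nil /= /refl /rot !mulGE /= !mulDE /=.
  congr (_, _, _); first by ring.
  by apply/val_inj.
- move=> g; rewrite !inE => /or3P [/eqP->|/eqP->|/or3P [/eqP->|/eqP->|/orP [/eqP->|/eqP->]]];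
    apply/eqP; rewrite order2P; apply/andP; split;
    rewrite /refl /rot ?mulGE /= ?mulDE /=; try done;
    apply/eqP; rewrite ?subrr ?addr0 oneGE; first [by rewrite z2add z2_11 | by move/(congr1 (fun g => g.1.2))].
- move=> g; rewrite !inE => /or3P [/eqP->|/eqP->|/or3P [/eqP->|/eqP->|/orP [/eqP->|/eqP->]]] //.
- apply/eqP; rewrite eqEsubset subsetT /=; apply/subsetP=> g _.
  set A := [set g0 in V1 n].
  have Hr0 : refl n 0%R \in <<A>>%g by apply: mem_gen; rewrite inE /V1 !inE eqxx.
  have Hr1 : refl n (-1)%R \in <<A>>%g by apply: mem_gen; rewrite inE /V1 !inE eqxx !orbT.
  have Ht : rot n 0%R \in <<A>>%g by apply: mem_gen; rewrite inE /V1 !inE eqxx !orbT.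
  have EX : (refl n 0%R * refl n (-1)%R)%g = ((1%R, false), 0%R) :> GT n.
    rewrite /refl mulGE /= mulDE /= opprK add0r; congr (_, _); by apply/val_inj.
  have EY : (refl n 0%R * rot n 0%R)%g = ((0%R, true), 0%R) :> GT n.
    rewrite /refl /rot mulGE /= mulDE /= oppr0 addr0; congr (_, _); by apply/val_inj.
  have HX : ((1%R, false), 0%R) \in <<A>>%g by rewrite -EX; apply: groupM.
  have HY : ((0%R, true), 0%R) \in <<A>>%g by rewrite -EY; apply: groupM.
  case: g => [[j b] c].
  have Ej : ((j, false), 0%R) = ((((1%R, false), 0%R) : GT n) ^+ (nat_of_ord j))%g.
    by rewrite GX natr_Zp.
  have Hj : ((j, false), 0%R) \in <<A>>%g by rewrite Ej; apply: groupX.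
  have Hjb : ((j, b), 0%R) \in <<A>>%g.
    case: b; last exact: Hj.
    have -> : ((j, true), 0%R) = ((((j, false), 0%R) : GT n) * ((0%R, true), 0%R))%g :> GT n.
      by rewrite mulGE /= mulDE /= addr0; congr (_, _); apply/val_inj.
    by apply: groupM.
  case: (z2_cases c) => ->; first exact: Hjb.
  have -> : ((j, b), 1%R) = ((((j, b), 0%R) : GT n) * rot n 0%R)%g :> GT n.
    rewrite /rot mulGE /= mulDE /=; case: b {Hjb}; rewrite ?oppr0 addr0; congr (_, _); by apply/val_inj.
  by apply: groupM.
Qed.

Local Open Scope group_scope.

Theorem lemma5p11 (n : nat) (hn : (2 <= n)%N) :
  let x := gx n in let y := gy n in let e := ge n in
  let V1 := [:: w1 y; w1 y; w1 (y * x); w1 (y * x); w1 e; w1 e] in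
  (odd n ->
     admissible V1 /\ forall v, admissible v -> hequiv v V1) /\
  (forall m : nat, n = (2 * m)%N ->
     forall v : seq (GT n), admissible v ->
       [\/ hequiv v V1,
           hequiv v [:: w1 y; w1 (y * x ^+ m); w1 (y * x); w1 (y * x);
                        w1 (x ^+ m); w1 e],
           odd m /\
           hequiv v [:: w1 y; w1 (y * x ^+ m); w1 (y * x ^+ 2); w1 (y * x ^+ 2);
                        w1 (x ^+ m); w1 e]
         | n = 2%N /\
           (hequiv v [:: w1 y; w1 y; w1 x; w1 x; w1 e; w1 e] \/
            hequiv v [:: w1 y; w1 (y * x); w1 x; w1 x; w1 x; w1 e])]).
Proof.
move=> x y e V1'.
have EV1 : V1' = V1 n.
  rewrite /V1' /V1 /w1 /refl /rot /x /y /e /gx /gy /ge /dih_x /dih_y mulDE /= add0r.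
  by [].
have Hc := Zp_cast hn.
split.
- move=> Hodd; rewrite EV1; split; first exact: adm_V1.
  move=> v Hv; case: (mainCc _ _ Hv) => // [[k [Hk0 Hkk _]]].
  have Hn := u2 _ _ Hkk Hk0.
  have : odd (2 * nat_of_ord k) by rewrite Hn Hc.
  by rewrite oddM.
- move=> m Hm v Hv; case: (mainCc _ _ Hv) => [H1|[k [Hk0 Hkk H]]].
  + by apply: Or41; rewrite EV1.
  + apply: Or42.
    have Em : k = (m%:R)%R.
      apply: uniq2 => //.
      * by rewrite -natrD addnn -mul2n -Hm; apply: pchar_Zp.
      * apply/eqP => /(congr1 val); rewrite /= val_Zp_nat // modn_small; last by lia.
        by move=> Hm0; move: Hm hn; rewrite Hm0 => ->.
    have Hnk : (- k = k)%R by apply: addr0_eq.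
    suff -> : [:: w1 y; w1 (y * x ^+ m); w1 (y * x); w1 (y * x); w1 (x ^+ m); w1 e] = V2 n k
      by [].
    rewrite /V2 /w1 /refl /rot /x /y /e /gx /gy /ge dihX /dih_x /dih_y !mulDE /= -Em !add0r Hnk.
    by [].
Qed.
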